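(* Let $c>0$ and let $h$ additionally satisfy $h(y)>-1$ for $y\in(-\pi,\pi)$. For $\vartheta\in(-1,1)$ and $y\in(-\pi,\pi]$ let $u(x,t;\vartheta,y)$ be the entire solution of $\partial_t u=\partial_{xx}u-c\partial_x u$ ($x>0$), $\partial_x u=1+\vartheta h(u)$ ($x=0$), which is relative periodic ($u(\cdot,t+T)=u(\cdot,t)-2\pi$ for a minimal $T=T(\vartheta)>0$), satisfies $\partial_x u>0$, $\partial_t u<0$, and is normalized by $u(0,0;\vartheta,y)=y$. Then for every fixed $y\in(-\pi,\pi]$ and all $M>0$, $\tau>0$, the family $\{u(\cdot,\cdot;\vartheta,y):\vartheta\in(-1,1)\}$ is uniformly bounded in $L^\infty([0,M]\times[-\tau,\tau])$.
   Context: $h\in C^2(\mathbb{R},\mathbb{R})$ is $2\pi$-periodic with $\max h=1$, $\min h=h(\pi)=-1$. Entire solutions are classical solutions for all $t\in\mathbb{R}$ with $e^{-cx/2}u(\cdot,t)$ bounded and uniformly continuous on $[0,\infty)$. For each $\vartheta\in(-1,1)$ such relative periodic monotone solutions exist and are unique up to time translation among entire solutions with $\partial_t u<0$, so the normalization is well defined. *)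

(* Defs.v *)
From Stdlib Require Import Reals.
From Coquelicot Require Import Coquelicot.
Open Scope R_scope.

Definition admissible_h (h : R -> R) : Prop :=
  (forall x, ex_derive_n h 2 x) /\
  (forall x, continuous (Derive_n h 2) x) /\
  (forall x, h (x + 2 * PI) = h x) /\
  (forall x, h x <= 1) /\ (exists x, h x = 1) /\
  (forall x, -1 <= h x) /\ h PI = -1.

Definition cont_halfplane (u : R -> R -> R) : Prop :=
  forall x0 t0, 0 <= x0 -> forall eps, 0 < eps -> exists delta, 0 < delta /\
    forall x t, 0 <= x -> Rabs (x - x0) < delta -> Rabs (t - t0) < delta ->
      Rabs (u x t - u x0 t0) < eps.

Definition entire_solution (c theta : R) (h : R -> R) (u : R -> R -> R) : Prop :=
  cont_halfplane u /\
  (forall x t, 0 < x ->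
     ex_derive (fun s => u s t) x /\
     ex_derive_n (fun s => u s t) 2 x /\
     ex_derive (fun s => u x s) t /\
     Derive (fun s => u x s) t =
       Derive_n (fun s => u s t) 2 x - c * Derive (fun s => u s t) x) /\
  (forall t, filterlim (fun s => (u s t - u 0 t) / s) (at_right 0)
                       (locally (1 + theta * h (u 0 t)))) /\
  (forall t, exists B, forall x, 0 <= x -> Rabs (exp (- c * x / 2) * u x t) <= B) /\
  (forall t eps, 0 < eps -> exists delta, 0 < delta /\
     forall x1 x2, 0 <= x1 -> 0 <= x2 -> Rabs (x1 - x2) < delta ->
       Rabs (exp (- c * x1 / 2) * u x1 t - exp (- c * x2 / 2) * u x2 t) < eps).

Definition relative_periodic (u : R -> R -> R) (T : R) : Prop :=
  0 < T /\
  (forall x t, 0 <= x -> u x (t + T) = u x t - 2 * PI) /\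
  (forall T', 0 < T' < T ->
     ~ (forall x t, 0 <= x -> u x (t + T') = u x t - 2 * PI)).

Definition rel_periodic_monotone_solution (c theta : R) (h : R -> R)
    (u : R -> R -> R) : Prop :=
  entire_solution c theta h u /\
  (exists T, relative_periodic u T) /\
  (forall x t, 0 < x -> 0 < Derive (fun s => u s t) x) /\
  (forall t, 0 < 1 + theta * h (u 0 t)) /\
  (forall x t, 0 <= x -> ex_derive (fun s => u x s) t /\
                         Derive (fun s => u x s) t < 0).

(* Main.v *)
Require Import Defs.
From Stdlib Require Import Reals Lra Classical ClassicalEpsilon.
From Coquelicot Require Import Coquelicot.
Open Scope R_scope.

Lemma mvt_strict (f df : R -> R) a b : a < b ->
  (forall c, a < c < b -> is_derive f c (df c)) ->
  (forall c, a <= c <= b -> continuity_pt f c) ->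
  exists c, a < c < b /\ f b - f a = df c * (b - a).
Proof.
  intros Hab Hd Hc.
  assert (pr1 : forall c, a < c < b -> derivable_pt f c).
  { intros c Hc'. exists (df c). apply is_derive_Reals. now apply Hd. }
  assert (pr2 : forall c, a < c < b -> derivable_pt id c).
  { intros c _. apply derivable_pt_id. }
  destruct (MVT f id a b pr1 pr2 Hab Hc (fun c _ => derivable_continuous_pt _ _ (derivable_pt_id c)))
    as [c [P HP]].
  exists c. split; [exact P|].
  assert (E1 : derive_pt f c (pr1 c P) = df c).
  { apply derive_pt_eq_0. apply is_derive_Reals. now apply Hd. }
  assert (E2 : derive_pt id c (pr2 c P) = 1).
  { apply derive_pt_eq_0. apply derivable_pt_lim_id. }
  rewrite E1, E2 in HP. unfold id in HP. lra.
Qed.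

Lemma deriv_left (f : R -> R) x l d : is_derive f x l -> 0 < d ->
  (forall h, -d < h < 0 -> f x <= f (x + h)) -> l <= 0.
Proof.
  intros Hd Hpos Hh. apply is_derive_Reals in Hd.
  destruct (Rle_lt_dec l 0) as [|Hl]; [assumption|exfalso].
  destruct (Hd l Hl) as [e He].
  set (h := - (Rmin d e) / 2).
  assert (Hm1 : Rmin d e <= d) by apply Rmin_l.
  assert (Hm2 : Rmin d e <= e) by apply Rmin_r.
  assert (Hm0 : 0 < Rmin d e) by (apply Rmin_pos; [lra| apply cond_pos]).
  assert (Hh0 : h < 0) by (unfold h; lra).
  assert (Hq : (f (x + h) - f x) / h <= 0).
  { unfold Rdiv.
    assert (-d < h < 0) by (unfold h; lra). specialize (Hh h H).
    assert (/ h < 0) by (apply Rinv_lt_0_compat; lra). nra. }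
  assert (Habs : Rabs h < e).
  { rewrite Rabs_left by lra. unfold h; lra. }
  specialize (He h (Rlt_not_eq _ _ Hh0) Habs).
  apply Rabs_def2 in He. lra.
Qed.

Lemma deriv_right (f : R -> R) x l d : is_derive f x l -> 0 < d ->
  (forall h, 0 < h < d -> f x <= f (x + h)) -> 0 <= l.
Proof.
  intros Hd Hpos Hh. apply is_derive_Reals in Hd.
  destruct (Rle_lt_dec 0 l) as [|Hl]; [assumption|exfalso].
  destruct (Hd (-l)) as [e He]; [lra|].
  set (h := (Rmin d e) / 2).
  assert (Hm1 : Rmin d e <= d) by apply Rmin_l.
  assert (Hm2 : Rmin d e <= e) by apply Rmin_r.
  assert (Hm0 : 0 < Rmin d e) by (apply Rmin_pos; [lra| apply cond_pos]).
  assert (Hh0 : 0 < h) by (unfold h; lra).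
  assert (Hq : 0 <= (f (x + h) - f x) / h).
  { unfold Rdiv. apply Rmult_le_pos.
    - assert (0 < h < d) by (unfold h; lra). specialize (Hh h H). lra.
    - left. apply Rinv_0_lt_compat. lra. }
  assert (Habs : Rabs h < e).
  { rewrite Rabs_right by lra. unfold h; lra. }
  specialize (He h (Rgt_not_eq _ _ Hh0) Habs).
  apply Rabs_def2 in He. lra.
Qed.

Lemma at_right_eps (q : R -> R) L : filterlim q (at_right 0) (locally L) ->
  forall eps, 0 < eps -> exists d, 0 < d /\ forall s, 0 < s < d -> Rabs (q s - L) < eps.
Proof.
  intros H eps He.
  pose proof (proj1 (@filterlim_locally R R_UniformSpace (at_right 0) _ q L) H (mkposreal eps He)) as H1.
  destruct H1 as [d Hd]. exists d. split; [apply cond_pos|].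
  intros s Hs. apply (Hd s).
  - change (Rabs (s - 0) < d). rewrite Rminus_0_r, Rabs_right by lra. lra.
  - lra.
Qed.

Lemma tube (P : R -> R -> Prop) ts :
  (forall x', 0 <= x' <= 3 -> exists d, 0 < d /\ forall x t, 0 <= x <= 3 ->
      Rabs (x - x') < d -> Rabs (t - ts) < d -> P x t) ->
  exists d, 0 < d /\ forall x t, 0 <= x <= 3 -> Rabs (t - ts) < d -> P x t.
Proof.
  intros H.
  assert (H' : forall x', exists d : posreal, 0 <= x' <= 3 -> forall x t, 0 <= x <= 3 ->
      Rabs (x - x') < d -> Rabs (t - ts) < d -> P x t).
  { intros x'. destruct (classic (0 <= x' <= 3)) as [Hx|Hx].
    - destruct (H x' Hx) as [d [Hd HP]]. exists (mkposreal d Hd). intros _. exact HP.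
    - exists (mkposreal 1 Rlt_0_1). intros C. contradiction. }
  set (delta := fun x' => proj1_sig (constructive_indefinite_description _ (H' x'))).
  assert (Hspec : forall x', 0 <= x' <= 3 -> forall x t, 0 <= x <= 3 ->
      Rabs (x - x') < delta x' -> Rabs (t - ts) < delta x' -> P x t).
  { intros x'. unfold delta. destruct (constructive_indefinite_description _ _) as [d Hd].
    simpl. exact Hd. }
  destruct (compactness_value_1d 0 3 delta) as [d Hd].
  exists d. split; [apply cond_pos|].
  intros x t Hx Ht. apply NNPP. intro Hn. apply (Hd x Hx).
  intros [t' [Ht' [Hxt Hdt]]]. apply Hn. apply (Hspec t' Ht' x t Hx Hxt). lra.
Qed.


Lemma mvt_x (u : R -> R -> R) t a b : cont_halfplane u ->
  (forall x, 0 < x -> ex_derive (fun s => u s t) x) -> 0 <= a < b ->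
  exists xi, a < xi < b /\ u b t - u a t = Derive (fun s => u s t) xi * (b - a).
Proof.
  intros Hc Hd Hab.
  set (fR := fun s => u (Rmax 0 s) t).
  destruct (mvt_strict fR (Derive (fun s => u s t)) a b) as [xi [Hxi E]].
  - lra.
  - intros c Hc'. apply is_derive_ext_loc with (fun s => u s t).
    + assert (Hcp : 0 < c) by lra. exists (mkposreal c Hcp). intros s Hs.
      change (Rabs (s - c) < c) in Hs. apply Rabs_def2 in Hs.
      unfold fR. rewrite Rmax_right by lra. reflexivity.
    + apply Derive_correct. apply Hd. lra.
  - intros c Hc'. intros eps He.
    destruct (Hc c t ltac:(lra) eps He) as [d [Hd0 Hdd]].
    exists d. split; [lra|]. intros x [_ Hx]. simpl in Hx |- *. unfold R_dist in Hx |- *.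
    unfold fR. rewrite (Rmax_right 0 c) by lra.
    apply Hdd.
    + apply Rmax_l.
    + unfold Rmax. destruct (Rle_dec 0 x).
      * exact Hx.
      * apply Rabs_def2 in Hx. rewrite Rabs_left1 by lra. lra.
    + rewrite Rminus_diag, Rabs_R0. lra.
  - exists xi. split; [exact Hxi|]. unfold fR in E.
    rewrite (Rmax_right 0 b), (Rmax_right 0 a) in E by lra. exact E.
Qed.

Lemma mono_x (u : R -> R -> R) t a b : cont_halfplane u ->
  (forall x, 0 < x -> ex_derive (fun s => u s t) x) ->
  (forall x, 0 < x -> 0 < Derive (fun s => u s t) x) ->
  0 <= a <= b -> u a t <= u b t.
Proof.
  intros Hc Hd Hp Hab. destruct (Req_dec a b) as [->|Hne]; [lra|].
  destruct (mvt_x u t a b Hc Hd ltac:(lra)) as [xi [Hxi E]].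
  specialize (Hp xi ltac:(lra)). nra.
Qed.

Lemma mono_t (u : R -> R -> R) x t1 t2 :
  (forall t, ex_derive (fun s => u x s) t /\ Derive (fun s => u x s) t < 0) ->
  t1 <= t2 -> u x t2 <= u x t1.
Proof.
  intros H Ht. destruct (Req_dec t1 t2) as [->|Hne]; [lra|].
  destruct (mvt_strict (fun s => u x s) (Derive (fun s => u x s)) t1 t2) as [xi [Hxi E]].
  - lra.
  - intros c _. apply Derive_correct. apply H.
  - intros c _. apply continuity_pt_filterlim. exact (ex_derive_continuous (fun s => u x s) c (proj1 (H c))).
  - destruct (H xi) as [_ Hn]. nra.
Qed.


Lemma g_derive (f : R -> R) c x : ex_derive_n f 2 x ->
  is_derive (fun s => exp (- c * s) * Derive f s) x
    (exp (- c * x) * (Derive_n f 2 x - c * Derive f x)).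
Proof.
  intros H2.
  assert (He : is_derive (fun s => exp (- c * s)) x (- c * exp (- c * x))).
  { auto_derive; [auto| ring]. }
  assert (HD : is_derive (Derive f) x (Derive_n f 2 x)).
  { change (is_derive (Derive_n f 1) x (Derive (Derive_n f 1) x)).
    apply Derive_correct. exact H2. }
  pose proof (is_derive_mult _ _ x _ _ He HD (fun n m => Rmult_comm n m)) as Hm.
  simpl in Hm.
  replace (exp (- c * x) * (Derive_n f 2 x - c * Derive f x)) with
    (plus (mult (- c * exp (- c * x)) (Derive f x)) (mult (exp (- c * x)) (Derive_n f 2 x))).
  - exact Hm.
  - unfold plus, mult; simpl. ring.
Qed.

Lemma g_decr (f : R -> R) c a b :
  (forall x, 0 < x -> ex_derive_n f 2 x) ->
  (forall x, 0 < x -> Derive_n f 2 x - c * Derive f x < 0) ->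
  0 < a < b -> exp (- c * b) * Derive f b <= exp (- c * a) * Derive f a.
Proof.
  intros H2 Hn Hab.
  destruct (mvt_strict (fun s => exp (- c * s) * Derive f s)
     (fun x => exp (- c * x) * (Derive_n f 2 x - c * Derive f x)) a b) as [xi [Hxi E]].
  - lra.
  - intros y Hy. apply g_derive. apply H2. lra.
  - intros y Hy. apply continuity_pt_filterlim.
    exact (ex_derive_continuous _ y (ex_intro _ _ (g_derive f c y (H2 y ltac:(lra))))).
  - specialize (Hn xi ltac:(lra)). pose proof (exp_pos (- c * xi)).
    set (q := Derive_n f 2 xi - c * Derive f xi) in *.
    set (p := exp (- c * xi)) in *.
    assert (p * q < 0) by nra.
    assert (p * q * (b - a) < 0) by nra. lra.
Qed.

Lemma grad_bound (u : R -> R -> R) c t L : 0 < c -> cont_halfplane u ->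
  (forall x, 0 < x -> ex_derive (fun s => u s t) x) ->
  (forall x, 0 < x -> ex_derive_n (fun s => u s t) 2 x) ->
  (forall x, 0 < x -> Derive_n (fun s => u s t) 2 x - c * Derive (fun s => u s t) x < 0) ->
  (forall x, 0 < x -> 0 < Derive (fun s => u s t) x) ->
  filterlim (fun s => (u s t - u 0 t) / s) (at_right 0) (locally L) -> L < 2 ->
  forall x, 0 < x -> exp (- c * x) * Derive (fun s => u s t) x <= 2.
Proof.
  intros Hc0 Hc Hd1 Hd2 Hn Hp Hbc HL x Hx.
  set (G := exp (- c * x) * Derive (fun s => u s t) x).
  destruct (Rle_lt_dec G 2) as [|HG]; [assumption|exfalso].
  destruct (at_right_eps _ _ Hbc (G - L) ltac:(lra)) as [d [Hd Hdd]].
  set (s := Rmin d x / 2).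
  assert (Hm1 : Rmin d x <= d) by apply Rmin_l.
  assert (Hm2 : Rmin d x <= x) by apply Rmin_r.
  assert (Hm0 : 0 < Rmin d x) by (apply Rmin_pos; lra).
  specialize (Hdd s ltac:(unfold s; lra)). apply Rabs_def2 in Hdd.
  destruct (mvt_x u t 0 s Hc Hd1 ltac:(unfold s; lra)) as [xi [Hxi E]].
  assert (Eq : (u s t - u 0 t) / s = Derive (fun s => u s t) xi).
  { rewrite E. field. unfold s; lra. }
  rewrite Eq in Hdd.
  assert (Hdec := g_decr (fun s => u s t) c xi x Hd2 Hn ltac:(unfold s in Hxi; lra)).
  fold G in Hdec.
  assert (exp (- c * xi) <= 1).
  { rewrite <- exp_0. destruct (Req_dec (- c * xi) 0) as [->|Hne]; [lra|].
    left. apply exp_increasing. nra. }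
  specialize (Hp xi ltac:(lra)). nra.
Qed.

Lemma upper_x (u : R -> R -> R) c t L : 0 < c -> cont_halfplane u ->
  (forall x, 0 < x -> ex_derive (fun s => u s t) x) ->
  (forall x, 0 < x -> ex_derive_n (fun s => u s t) 2 x) ->
  (forall x, 0 < x -> Derive_n (fun s => u s t) 2 x - c * Derive (fun s => u s t) x < 0) ->
  (forall x, 0 < x -> 0 < Derive (fun s => u s t) x) ->
  filterlim (fun s => (u s t - u 0 t) / s) (at_right 0) (locally L) -> L < 2 ->
  forall x, 0 <= x -> u x t <= u 0 t + 2 * x * exp (c * x).
Proof.
  intros Hc0 Hc Hd1 Hd2 Hn Hp Hbc HL x Hx.
  destruct (Req_dec x 0) as [->|Hne].
  { pose proof (exp_pos (c * 0)). nra. }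
  destruct (mvt_x u t 0 x Hc Hd1 ltac:(lra)) as [xi [Hxi E]].
  pose proof (grad_bound u c t L Hc0 Hc Hd1 Hd2 Hn Hp Hbc HL xi ltac:(lra)) as Hg.
  assert (Hexp : exp (- c * xi) * exp (c * xi) = 1).
  { rewrite <- exp_plus. replace (- c * xi + c * xi) with 0 by ring. apply exp_0. }
  assert (Hmon : exp (c * xi) <= exp (c * x)).
  { left. apply exp_increasing. nra. }
  assert (HD : Derive (fun s => u s t) xi <= 2 * exp (c * xi)).
  { pose proof (exp_pos (c * xi)). pose proof (exp_pos (- c * xi)). nra. }
  pose proof (Hp xi ltac:(lra)). nra.
Qed.


Lemma barrier (u : R -> R -> R) c (B : R -> R) : 0 < c -> cont_halfplane u ->
  (forall x t, 0 < x -> ex_derive (fun s => u s t) x) ->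
  (forall x t, 0 < x -> ex_derive_n (fun s => u s t) 2 x) ->
  (forall x t, 0 < x -> Derive (fun s => u x s) t =
      Derive_n (fun s => u s t) 2 x - c * Derive (fun s => u s t) x) ->
  (forall x t, 0 < x -> 0 < Derive (fun s => u s t) x) ->
  (forall t, filterlim (fun s => (u s t - u 0 t) / s) (at_right 0) (locally (B t))) ->
  (forall t, B t < 2) ->
  (forall x t, 0 <= x -> ex_derive (fun s => u x s) t /\ Derive (fun s => u x s) t < 0) ->
  forall t0 s, 0 <= s -> u 0 t0 - 2 - (2 * c + 3) * s < u 0 (t0 + s).
Proof.
  intros Hc0 Hc Hd1 Hd2 Hpde Hp Hbc HB Hut t0 s Hs.
  set (b := 2 * c + 3). set (Y := u 0 t0). set (t1 := t0 + s).
  set (v := fun x t => u x t - (Y - 2 + (2 * x - x * x) - b * (t - t0))).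
  assert (Hmx : forall t a a', 0 <= a <= a' -> u a t <= u a' t).
  { intros t a a' Ha. apply (mono_x u t a a' Hc (fun x => Hd1 x t) (fun x => Hp x t) Ha). }
  assert (Hinit : forall x, 0 <= x <= 3 -> v x t0 > 0).
  { intros x Hx. unfold v, Y. pose proof (Hmx t0 0 x ltac:(lra)).
    pose proof (Rle_0_sqr (x - 1)) as Hsq. unfold Rsqr in Hsq.
    assert (b * (t0 - t0) = 0) by ring. lra. }
  assert (Hloc : forall ts x', 0 <= x' <= 3 -> v x' ts > 0 -> exists d, 0 < d /\
     forall x t, 0 <= x <= 3 -> Rabs (x - x') < d -> Rabs (t - ts) < d -> v x t > 0).
  { intros ts x' Hx' Hm. set (m := v x' ts) in *.
    destruct (Hc x' ts ltac:(lra) (m / 2) ltac:(lra)) as [d1 [Hd1p Hd1u]].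
    assert (Hbp : 0 < b) by (unfold b; lra).
    set (d2 := m / (2 * (b + 5))).
    assert (Hd2p : 0 < d2) by (unfold d2; apply Rdiv_lt_0_compat; lra).
    assert (Hd2m : d2 * (2 * (b + 5)) = m) by (unfold d2; field; lra).
    exists (Rmin d1 (Rmin 1 d2)). split.
    { apply Rmin_pos; [lra| apply Rmin_pos; lra]. }
    intros x t Hx Hxx Htt.
    assert (Hm1 := Rmin_l d1 (Rmin 1 d2)). assert (Hm2 := Rmin_r d1 (Rmin 1 d2)).
    assert (Hm3 := Rmin_l 1 d2). assert (Hm4 := Rmin_r 1 d2).
    set (dd := Rmin d1 (Rmin 1 d2)) in *.
    assert (Hu := Hd1u x t ltac:(lra) ltac:(lra) ltac:(lra)).
    apply Rabs_def2 in Hu. apply Rabs_def2 in Hxx. apply Rabs_def2 in Htt.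
    assert (Hw1 : (dd - (x - x')) * (4 + (2 - x - x')) >= 0) by nra.
    assert (Hw2 : (dd + (x - x')) * (4 - (2 - x - x')) >= 0) by nra.
    assert (Hb1 : b * (t - ts) >= - b * dd) by nra.
    assert (Hb2 : (b + 4) * dd <= (b + 4) * d2) by nra.
    assert (HPb : (2 * x - x * x) - (2 * x' - x' * x') <= 4 * dd) by lra.
    assert (Hvdiff : v x t - m = (u x t - u x' ts) - ((2 * x - x * x) - (2 * x' - x' * x')) + b * (t - ts)).
    { unfold m, v. ring. }
    lra. }
  set (G := fun t => t0 <= t <= t1 /\ forall t', t0 <= t' <= t -> forall x, 0 <= x <= 3 -> v x t' > 0).
  assert (HG0 : G t0).
  { split; [unfold t1; lra|]. intros t' Ht' x Hx. replace t' with t0 by lra. apply Hinit, Hx. }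
  destruct (completeness G) as [ts [Hub Hlub]].
  { exists t1. intros t [Ht _]. lra. }
  { exists t0. exact HG0. }
  assert (Hts0 : t0 <= ts) by (apply Hub; exact HG0).
  assert (Hts1 : ts <= t1) by (apply Hlub; intros t [Ht _]; lra).
  assert (HP : forall t', t0 <= t' < ts -> forall x, 0 <= x <= 3 -> v x t' > 0).
  { intros t' Ht' x Hx. destruct (classic (exists g, G g /\ t' <= g)) as [[g [[_ Hg] Htg]]|Hn].
    - apply (Hg t'); lra.
    - exfalso. assert (ts <= t'); [|lra]. apply Hlub. intros g Hg.
      destruct (Rle_lt_dec g t'); [assumption|]. exfalso. apply Hn. exists g. split; [assumption|lra]. }
  assert (Hgoal : v 0 t1 > 0).
  2:{ assert (Eb : b * (t1 - t0) = b * s) by (unfold t1; ring).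
       unfold v in Hgoal. rewrite Eb in Hgoal. lra. }
  destruct (classic (forall x, 0 <= x <= 3 -> v x ts > 0)) as [Hall|Hnot].
  - destruct (Req_dec ts t1) as [Heq|Hne].
    { rewrite <- Heq. apply Hall. lra. }
    destruct (tube (fun x t => v x t > 0) ts (fun x' Hx' => Hloc ts x' Hx' (Hall x' Hx'))) as [d [Hd Hdd]].
    exfalso.
    set (t'' := Rmin t1 (ts + d / 2)).
    assert (Hm1 := Rmin_l t1 (ts + d / 2)). assert (Hm2 := Rmin_r t1 (ts + d / 2)).
    fold t'' in Hm1, Hm2.
    assert (Hgt : ts < t'') by (unfold t''; apply Rmin_glb_lt; lra).
    assert (G t'').
    { split; [lra|]. intros t' Ht' x Hx. destruct (Rlt_le_dec t' ts).
      - apply HP; lra.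
      - apply Hdd; [exact Hx|]. rewrite Rabs_right by lra. lra. }
    assert (t'' <= ts) by (apply Hub; assumption). lra.
  - destruct (not_all_ex_not _ _ Hnot) as [xs Hxs].
    apply imply_to_and in Hxs. destruct Hxs as [Hxs Hvs]. apply Rnot_gt_le in Hvs.
    assert (Hts : t0 < ts).
    { destruct (Req_dec t0 ts) as [E|]; [|lra]. rewrite <- E in Hvs. pose proof (Hinit xs Hxs). lra. }
    assert (Hge : forall x, 0 <= x <= 3 -> v x ts >= 0).
    { intros x Hx. destruct (Rge_or_gt (v x ts) 0) as [|Hlt]; [assumption|exfalso].
      assert (Hcont : continuity_pt (fun t => u x t) ts).
      { apply continuity_pt_filterlim.
        exact (ex_derive_continuous (fun t => u x t) ts (proj1 (Hut x ts ltac:(lra)))). }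
      destruct (Hcont (- v x ts) ltac:(lra)) as [d [Hd Hdd]].
      set (t' := ts - Rmin d (ts - t0) / 2).
      assert (Hm1 := Rmin_l d (ts - t0)). assert (Hm2 := Rmin_r d (ts - t0)).
      assert (Hm0 : 0 < Rmin d (ts - t0)) by (apply Rmin_pos; lra).
      assert (Hdist : Rabs (u x t' - u x ts) < - v x ts).
      { apply (Hdd t'). split.
        - split; [exact I| unfold t'; lra].
        - simpl. unfold R_dist. rewrite Rabs_left by (unfold t'; lra). unfold t'; lra. }
      apply Rabs_def2 in Hdist.
      assert (Hpos : v x t' > 0) by (apply HP; [unfold t'; lra| exact Hx]).
      assert (Hbp : 0 < b) by (unfold b; lra).
      assert (b * (t' - ts) < 0) by (unfold t'; nra).
      unfold v in *. lra. }
    assert (Hv0 : v xs ts = 0) by (pose proof (Hge xs Hxs); lra).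
    exfalso.
    destruct (Req_dec xs 0) as [Hx0|Hx0].
    +
      subst xs.
      set (L := B ts). assert (HL := HB ts). fold L in HL.
      destruct (at_right_eps _ _ (Hbc ts) ((2 - L) / 2) ltac:(lra)) as [d [Hd Hdd]].
      set (s' := Rmin d (Rmin 3 ((2 - L) / 2)) / 2).
      assert (Hm1 := Rmin_l d (Rmin 3 ((2 - L) / 2))). assert (Hm2 := Rmin_r d (Rmin 3 ((2 - L) / 2))).
      assert (Hm3 := Rmin_l 3 ((2 - L) / 2)). assert (Hm4 := Rmin_r 3 ((2 - L) / 2)).
      assert (Hm0 : 0 < Rmin d (Rmin 3 ((2 - L) / 2))) by (apply Rmin_pos; [lra| apply Rmin_pos; lra]).
      specialize (Hdd s' ltac:(unfold s'; lra)). apply Rabs_def2 in Hdd. fold L in Hdd.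
      assert (Hv := Hge s' ltac:(unfold s'; lra)).
      assert (Hdiff : u s' ts - u 0 ts >= 2 * s' - s' * s').
      { unfold v in Hv, Hv0. lra. }
      assert (Hq : (u s' ts - u 0 ts) / s' >= 2 - s').
      { assert (Hs'p : 0 < s') by (unfold s'; lra).
        replace (2 - s') with ((2 * s' - s' * s') / s') by (field; lra).
        apply Rle_ge. unfold Rdiv. apply Rmult_le_compat_r.
        - left. apply Rinv_0_lt_compat. lra.
        - lra. }
      unfold s' in *. lra.
    + destruct (Req_dec xs 3) as [Hx3|Hx3].
      * subst xs. assert (H0 := Hge 0 ltac:(lra)). pose proof (Hmx ts 0 3 ltac:(lra)).
        unfold v in H0, Hv0. lra.
      *
        assert (Hxi : 0 < xs < 3) by lra.
        set (f := fun s => u s ts).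
        set (w := fun s => f s - (2 * s - s * s)).
        assert (Hwmin : forall x, 0 <= x <= 3 -> w xs <= w x).
        { intros x Hx. pose proof (Hge x Hx). unfold w, f. unfold v in *. lra. }
        assert (Hwd : forall x, 0 < x -> is_derive w x (Derive f x - (2 - 2 * x))).
        { intros x Hx. unfold w.
          assert (Hpoly : is_derive (fun s => 2 * s - s * s) x (2 - 2 * x)) by (auto_derive; [auto|ring]).
          pose proof (is_derive_minus _ _ x _ _ (Derive_correct f x (Hd1 x ts Hx)) Hpoly) as Hm.
          exact Hm. }
        assert (HD0 : Derive f xs - (2 - 2 * xs) = 0).
        { apply Rle_antisym.
          - apply (deriv_left w xs _ (Rmin xs (3 - xs)) (Hwd xs ltac:(lra))).
            + apply Rmin_pos; lra.
            + intros h Hh. assert (Hm1 := Rmin_l xs (3 - xs)). apply Hwmin. lra.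
          - apply (deriv_right w xs _ (Rmin xs (3 - xs)) (Hwd xs ltac:(lra))).
            + apply Rmin_pos; lra.
            + intros h Hh. assert (Hm1 := Rmin_r xs (3 - xs)). apply Hwmin. lra. }
        assert (HD2 : Derive_n f 2 xs >= -2).
        { destruct (Rge_or_gt (Derive_n f 2 xs) (-2)) as [|Hlt]; [assumption|exfalso].
          assert (HDD : is_derive (Derive f) xs (Derive_n f 2 xs)).
          { change (is_derive (Derive_n f 1) xs (Derive (Derive_n f 1) xs)).
            apply Derive_correct. apply (Hd2 xs ts). lra. }
          apply is_derive_Reals in HDD.
          destruct (HDD (-2 - Derive_n f 2 xs) ltac:(lra)) as [e He].
          assert (Hneg : forall h, 0 < h < e -> Derive f (xs + h) - (2 - 2 * (xs + h)) < 0).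
          { intros h Hh. assert (Hh0 : h <> 0) by lra.
            assert (Habs : Rabs h < e) by (rewrite Rabs_right; lra).
            specialize (He h Hh0 Habs). apply Rabs_def2 in He.
            assert (Hq : (Derive f (xs + h) - Derive f xs) / h < -2) by lra.
            assert (Hq2 : Derive f (xs + h) - Derive f xs < -2 * h).
            { replace (Derive f (xs + h) - Derive f xs) with ((Derive f (xs + h) - Derive f xs) / h * h) by (field; lra).
              nra. }
            lra. }
          set (h0 := Rmin e (3 - xs) / 2).
          assert (Hm1 := Rmin_l e (3 - xs)). assert (Hm2 := Rmin_r e (3 - xs)).
          assert (Hm0 : 0 < Rmin e (3 - xs)) by (apply Rmin_pos; [apply cond_pos| lra]).
          destruct (mvt_strict w (fun x => Derive f x - (2 - 2 * x)) xs (xs + h0)) as [xi [Hxi' E]].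
          - unfold h0; lra.
          - intros y Hy. apply Hwd. lra.
          - intros y Hy. apply continuity_pt_filterlim.
            exact (ex_derive_continuous w y (ex_intro _ _ (Hwd y ltac:(lra)))).
          - assert (Hn := Hneg (xi - xs) ltac:(unfold h0 in Hxi'; lra)).
            replace (xs + (xi - xs)) with xi in Hn by ring.
            assert (Hw := Hwmin (xs + h0) ltac:(unfold h0; lra)).
            assert (Hh0p : 0 < h0) by (unfold h0; lra).
            replace (xs + h0 - xs) with h0 in E by ring.
            nra. }
        assert (Hut' : Derive (fun s => u xs s) ts >= -2 - 2 * c).
        { rewrite (Hpde xs ts ltac:(lra)). fold f. nra. }
        assert (HF : is_derive (fun t => u xs t + b * t) ts (Derive (fun s => u xs s) ts + b)).
        { assert (Hbt : is_derive (fun t => b * t) ts b) by (auto_derive; [auto|ring]).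
          pose proof (is_derive_plus _ _ ts _ _ (Derive_correct _ ts (proj1 (Hut xs ts ltac:(lra))))
            Hbt) as Hm. exact Hm. }
        assert (Hle := deriv_left _ ts _ (ts - t0) HF ltac:(lra)).
        assert (Hle' : Derive (fun s => u xs s) ts + b <= 0).
        { apply Hle. intros h Hh. assert (Hv := HP (ts + h) ltac:(lra) xs Hxs).
          unfold v in Hv, Hv0. lra. }
        unfold b in Hle'. lra.
Qed.


Theorem lemma17 (c : R) (h : R -> R) :
  0 < c ->
  admissible_h h ->
  (forall z, -PI < z < PI -> -1 < h z) ->
  forall y, -PI < y <= PI ->
  forall M tau, 0 < M -> 0 < tau ->
  exists K, forall theta, -1 < theta < 1 ->
    forall u : R -> R -> R,
      rel_periodic_monotone_solution c theta h u ->
      u 0 0 = y ->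
      forall x t, 0 <= x <= M -> -tau <= t <= tau -> Rabs (u x t) <= K.
Proof.
  intros Hc0 Hadm _ y _ M tau HM Htau.
  destruct Hadm as [_ [_ [_ [Hh1 [_ [Hh2 _]]]]]].
  exists (Rabs y + 2 + (2 * c + 3) * tau + 2 * M * exp (c * M)).
  intros theta Hth u [[Hc [Hint [Hbc _]]] [_ [Hux [_ Hut]]]] Hy x t Hx Ht.
  assert (HB : forall t, 1 + theta * h (u 0 t) < 2).
  { intros t'. pose proof (Hh1 (u 0 t')). pose proof (Hh2 (u 0 t')).
    set (z := h (u 0 t')) in *.
    destruct (Rle_lt_dec 0 theta).
    - assert (0 <= (1 + theta - (1 - theta)) * (1 - z)) by (apply Rmult_le_pos; lra).
      assert (0 <= (1 - theta) * (1 + z)) by (apply Rmult_le_pos; lra). lra.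
    - assert (0 <= (1 - theta - (1 + theta)) * (1 + z)) by (apply Rmult_le_pos; lra).
      assert (0 <= (1 + theta) * (1 - z)) by (apply Rmult_le_pos; lra). lra. }
  assert (Hd1 : forall x t, 0 < x -> ex_derive (fun s => u s t) x)
    by (intros x' t' H'; exact (proj1 (Hint x' t' H'))).
  assert (Hd2 : forall x t, 0 < x -> ex_derive_n (fun s => u s t) 2 x)
    by (intros x' t' H'; exact (proj1 (proj2 (Hint x' t' H')))).
  assert (Hpde : forall x t, 0 < x -> Derive (fun s => u x s) t =
      Derive_n (fun s => u s t) 2 x - c * Derive (fun s => u s t) x)
    by (intros x' t' H'; exact (proj2 (proj2 (proj2 (Hint x' t' H'))))).
  assert (Hneg : forall x t, 0 < x ->
      Derive_n (fun s => u s t) 2 x - c * Derive (fun s => u s t) x < 0).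
  { intros x' t' Hx'. rewrite <- Hpde by assumption. apply Hut. lra. }
  pose proof (barrier u c (fun t => 1 + theta * h (u 0 t)) Hc0 Hc Hd1 Hd2 Hpde Hux Hbc HB Hut) as Hbar.
  assert (Hlow0 := Hbar 0 tau ltac:(lra)). replace (0 + tau) with tau in Hlow0 by ring.
  assert (Hup0 := Hbar (- tau) tau ltac:(lra)). replace (- tau + tau) with 0 in Hup0 by ring.
  rewrite Hy in Hlow0, Hup0.
  assert (Hmt1 : u 0 tau <= u 0 t) by exact (mono_t u 0 t tau (fun t' => Hut 0 t' (Rle_refl 0)) (proj2 Ht)).
  assert (Hmt2 : u 0 t <= u 0 (- tau)) by exact (mono_t u 0 (- tau) t (fun t' => Hut 0 t' (Rle_refl 0)) (proj1 Ht)).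
  assert (Hx' : 0 <= 0 <= x) by lra.
  assert (Hmx : u 0 t <= u x t) by exact (mono_x u t 0 x Hc (fun x => Hd1 x t) (fun x => Hux x t) Hx').
  assert (Hupx := upper_x u c t _ Hc0 Hc (fun x => Hd1 x t) (fun x => Hd2 x t) (fun x => Hneg x t)
      (fun x => Hux x t) (Hbc t) (HB t) x ltac:(lra)).
  assert (Hexp : exp (c * x) <= exp (c * M)).
  { destruct (Req_dec x M) as [->|]; [lra|]. left. apply exp_increasing.
    apply Rmult_lt_compat_l; lra. }
  assert (Hexpp : 0 < exp (c * x)) by apply exp_pos.
  assert (2 * x * exp (c * x) <= 2 * M * exp (c * M)).
  { apply Rmult_le_compat; lra. }
  apply Rabs_le. pose proof (Rle_abs y). pose proof (Rle_abs (- y)). rewrite Rabs_Ropp in *.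
  split; lra.
Qed.
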